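(* Let $r\ge1$ and let $P:\{0,1\}^r\to\{0,1\}$ be a predicate with an affine projection to AND. Then there is a constant $c_r>0$ such that for every $\varepsilon\in[0,1)$ and every $k\ge 4r+2$, there exists an instance of CSP$(P)$ on $k$ Boolean variables for which every $(1\pm\varepsilon)$-sparsifier uses at least $c_r k^2$ constraints.
   Context: A predicate $P:\{0,1\}^r\to\{0,1\}$ has an affine projection to AND if there exists $\pi:[r]\to\{0,1,x,\neg x,y,\neg y\}$ such that $\mathrm{AND}(x,y)=P(\pi(1),\dots,\pi(r))$ for all $x,y\in\{0,1\}$. An instance of CSP$(P)$ on Boolean variables $x_1,\dots,x_k$ is a list of constraints $C_j=P(x_{j,1},\dots,x_{j,r})$, $j\in[m]$; its value on $x\in\{0,1\}^k$ is $\sum_jC_j(x)$. A $(1\pm\varepsilon)$-sparsifier is a subset $T\subseteq[m]$ with nonnegative weights $(w_j)_{j\in T}$ such that for every $x\in\{0,1\}^k$, $(1-\varepsilon)\sum_{j=1}^mC_j(x)\le\sum_{j\in T}w_jC_j(x)\le(1+\varepsilon)\sum_{j=1}^mC_j(x)$. *)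

(* Defs.v *)
From mathcomp Require Import all_boot all_order all_algebra.
Set Implicit Arguments. Unset Strict Implicit. Unset Printing Implicit Defensive.
Import Order.TTheory GRing.Theory Num.Theory.
Local Open Scope ring_scope.

Definition pred_r (r : nat) := ('I_r -> bool) -> bool.

(* Targets of an affine projection: 0, 1, x, not x, y, not y. *)
Inductive aff_lit := L0 | L1 | LX | LNX | LY | LNY.

Definition eval_lit (l : aff_lit) (x y : bool) : bool :=
  match l with
  | L0 => false | L1 => true
  | LX => x | LNX => ~~ x
  | LY => y | LNY => ~~ y
  end.

Definition has_affine_proj_to_AND (r : nat) (P : pred_r r) : Prop :=
  exists pi : 'I_r -> aff_lit,
    forall x y : bool, (x && y) = P (fun i => eval_lit (pi i) x y).

(* An instance of CSP(P) on k variables with m constraints: the j-th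
   constraint is P(x_{S j 0}, ..., x_{S j (r-1)}). *)
Definition csp_instance (r k m : nat) := 'I_m -> 'I_r -> 'I_k.

Definition constr_val (r k m : nat) (P : pred_r r) (S : csp_instance r k m)
  (j : 'I_m) (x : 'I_k -> bool) : bool := P (fun i => x (S j i)).

(* (T, w) is a (1 +- eps)-sparsifier of the instance (weights outside T unused). *)
Definition is_sparsifier (R : realFieldType) (r k m : nat) (P : pred_r r)
  (S : csp_instance r k m) (eps : R) (T : {set 'I_m}) (w : 'I_m -> R) : Prop :=
  (forall j, j \in T -> 0 <= w j) /\
  forall x : 'I_k -> bool,
    let tot := \sum_(j < m) (constr_val P S j x)%:R in
    let sp := \sum_(j in T) w j * (constr_val P S j x)%:R in
    (1 - eps) * tot <= sp /\ sp <= (1 + eps) * tot.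

(* Main.v *)
Require Import Defs.
From mathcomp Require Import all_boot all_order all_algebra.
From mathcomp Require Import reals.
From mathcomp Require Import zify ring lra.
From Stdlib Require Import FunctionalExtensionality.
Import Order.TTheory GRing.Theory Num.Theory.
Local Open Scope ring_scope.

Definition lit_var (n : nat) (l : aff_lit) (a b : nat) : nat :=
  match l with
  | L0 => 4*n | L1 => 4*n+1 | LX => a | LNX => n+a | LY => 2*n+b | LNY => 3*n+b
  end%N.

Definition asg (n a0 b0 v : nat) : bool :=
  if (v < n)%N then v == a0
  else if (v < 2*n)%N then (v - n)%N != a0
  else if (v < 3*n)%N then (v - 2*n)%N == b0
  else if (v < 4*n)%N then (v - 3*n)%N != b0
  else if v == (4*n)%N then false else true.

Lemma lit_var_lt n l a b : (a < n)%N -> (b < n)%N -> (lit_var n l a b < 4*n+2)%N.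
Proof. by case: l => /= ha hb; lia. Qed.

Lemma asg_lit n l a b a0 b0 : (a < n)%N -> (b < n)%N ->
  asg n a0 b0 (lit_var n l a b) = eval_lit l (a == a0) (b == b0).
Proof.
move=> ha hb; rewrite /asg; case: l => /=.
- have -> : (4*n < n)%N = false by lia.
  have -> : (4*n < 2*n)%N = false by lia.
  have -> : (4*n < 3*n)%N = false by lia.
  have -> : (4*n < 4*n)%N = false by lia.
  by rewrite eqxx.
- have -> : (4*n+1 < n)%N = false by lia.
  have -> : (4*n+1 < 2*n)%N = false by lia.
  have -> : (4*n+1 < 3*n)%N = false by lia.
  have -> : (4*n+1 < 4*n)%N = false by lia.
  have -> : (4*n+1 == 4*n)%N = false by lia.
  by [].
- by rewrite ha.
- have -> : (n+a < n)%N = false by lia.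
  have -> : (n+a < 2*n)%N = true by lia.
  by rewrite addKn.
- have -> : (2*n+b < n)%N = false by lia.
  have -> : (2*n+b < 2*n)%N = false by lia.
  have -> : (2*n+b < 3*n)%N = true by lia.
  by rewrite addKn.
- have -> : (3*n+b < n)%N = false by lia.
  have -> : (3*n+b < 2*n)%N = false by lia.
  have -> : (3*n+b < 3*n)%N = false by lia.
  have -> : (3*n+b < 4*n)%N = true by lia.
  by rewrite addKn.
Qed.

Theorem lemma7p3 (R : realType) (r : nat) (hr : (1 <= r)%N) (P : pred_r r)
  (hP : has_affine_proj_to_AND P) :
  exists c : R, 0 < c /\
    forall (eps : R), 0 <= eps -> eps < 1 ->
    forall k : nat, (4 * r + 2 <= k)%N ->
    exists (m : nat) (S : csp_instance r k m),
      forall (T : {set 'I_m}) (w : 'I_m -> R),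
        is_sparsifier P S eps T w -> c * (k ^ 2)%:R <= (#|T|)%:R.
Proof.
case: hP => pi Hpi.
exists (81%:R^-1); split; first by rewrite invr_gt0 ltr0n.
move=> eps he0 he1 [|k'] hk; first by lia.
set n := ((k'.+1 - 2) %/ 4)%N.
have hn1 : (1 <= n)%N by rewrite /n; lia.
have hnk : (4*n+2 <= k'.+1)%N by rewrite /n; lia.
have hkn : (k'.+1 <= 9*n)%N by rewrite /n; lia.
pose S : csp_instance r k'.+1 (n*n) :=
  fun j i => inord (lit_var n (pi i) (j %/ n) (j %% n)).
exists (n*n)%N, S => T w [hw Hsp].
have key : forall j0 : 'I_(n*n), j0 \in T.
  move=> j0; apply/negPn/negP => hj0.
  pose x := fun v : 'I_k'.+1 => asg n (j0 %/ n) (j0 %% n) v.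
  have cv : forall j, constr_val P S j x = (j == j0).
    move=> j; rewrite /constr_val.
    have hj1 : (j %/ n < n)%N by rewrite ltn_divLR //; lia.
    have hj2 : (j %% n < n)%N by rewrite ltn_pmod.
    have -> : (fun i => x (S j i)) =
        fun i => eval_lit (pi i) ((j %/ n)%N == (j0 %/ n)%N) ((j %% n)%N == (j0 %% n)%N).
      apply: functional_extensionality => i.
      rewrite /x /S inordK; first by rewrite asg_lit.
      have := lit_var_lt n (pi i) _ _ hj1 hj2; lia.
    rewrite -Hpi; apply/idP/idP.
    - case/andP=> /eqP h1 /eqP h2; apply/eqP; apply: val_inj.
      by rewrite /= (divn_eq j n) (divn_eq j0 n) h1 h2.
    - by move/eqP->; rewrite !eqxx.
  have [H1 _] := Hsp x.
  move: H1; rewrite (bigD1 j0) //= cv eqxx big1; last first.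
    by move=> j /negbTE hj; rewrite cv hj.
  rewrite big1; last first.
    move=> j hj; rewrite cv.
    have -> : (j == j0) = false by apply/eqP => e; rewrite -e hj in hj0.
    by rewrite mulr0.
  rewrite addr0 mulr1 => H1; lra.
have hT : (n * n <= #|T|)%N.
  rewrite -{1}(card_ord (n*n)); apply: subset_leq_card; apply/subsetP => j _; exact: key.
have hk2 : (k'.+1 ^ 2 <= 81 * (n * n))%N by nia.
have h1 : (k'.+1 ^ 2)%:R <= 81%:R * (n*n)%:R :> R by rewrite -natrM ler_nat.
have h2 : (n*n)%:R <= (#|T|)%:R :> R by rewrite ler_nat.
have h3 : 81%:R^-1 * (k'.+1 ^ 2)%:R <= (n*n)%:R :> R.
  by rewrite ler_pdivrMl ?ltr0n.
lra.
Qed.
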